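(* Let $T\in C_0(\mathbb{R}^N;\mathbb{Z})$ be an integral $0$-chain (a finite integer combination of points of $\mathbb{R}^N$) which is the boundary of an integral Lipschitz $1$-chain. Then $\mathrm{FV}(T)=\mathrm{FV}(2T)/2$.
   Context: An integral Lipschitz $1$-chain in $\mathbb{R}^N$ is a finite formal integer combination of Lipschitz maps $[0,1]\to\mathbb{R}^N$; its mass is $\sum_i|a_i|\,\mathrm{length}(\alpha_i)$. $\mathrm{FV}(T)=\inf\{\mathrm{mass}\,U: U \text{ integral Lipschitz } 1\text{-chain},\ \partial U=T\}$. *)

(* Defs.v *)
From mathcomp Require Import all_boot all_order all_algebra.
From mathcomp Require Import all_classical all_reals.
From Stdlib Require List.
Set Implicit Arguments. Unset Strict Implicit. Unset Printing Implicit Defensive.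
Import Order.TTheory GRing.Theory Num.Theory.
Local Open Scope ring_scope.
Local Open Scope classical_set_scope.

Definition enorm {R : realType} {N : nat} (v : 'rV[R]_N) : R :=
  Num.sqrt (\sum_(i < N) v ord0 i ^+ 2).

(* Lipschitz map [0,1] -> R^N (only its values on [0,1] matter). *)
Definition lipschitz01 {R : realType} {N : nat} (g : R -> 'rV[R]_N) : Prop :=
  exists L : R, forall s t : R, 0 <= s <= 1 -> 0 <= t <= 1 ->
    enorm (g s - g t) <= L * `|s - t|.

Definition partition_sum {R : realType} {N : nat} (g : R -> 'rV[R]_N) (s : seq R) : R :=
  \sum_(i < (size s).-1) enorm (g (nth 0 s i.+1) - g (nth 0 s i)).

Definition curve_length {R : realType} {N : nat} (g : R -> 'rV[R]_N) : R :=
  sup [set x : R | exists s : seq R,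
        [/\ sorted <=%R s, all (fun t => 0 <= t <= 1) s & x = partition_sum g s]].

Definition chain1 (R : realType) (N : nat) := seq (int * (R -> 'rV[R]_N)).

Definition lipschitz_chain {R : realType} {N : nat} (U : chain1 R N) : Prop :=
  forall c, List.In c U -> lipschitz01 c.2.

Definition mass {R : realType} {N : nat} (U : chain1 R N) : R :=
  \sum_(c <- U) (`|c.1|%:~R * curve_length c.2).

Definition chain0 (R : realType) (N : nat) := 'rV[R]_N -> int.

Definition is_chain0 {R : realType} {N : nat} (T : chain0 R N) : Prop :=
  finite_set [set x | T x != 0].

Definition bdry {R : realType} {N : nat} (U : chain1 R N) : chain0 R N :=
  fun x => \sum_(c <- U) c.1 * ((x == c.2 1)%:R - (x == c.2 0)%:R).

Definition FV {R : realType} {N : nat} (T : chain0 R N) : R :=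
  inf [set m : R | exists U : chain1 R N,
        [/\ lipschitz_chain U, bdry U = T & m = mass U]].

Definition scale0 {R : realType} {N : nat} (k : int) (T : chain0 R N) : chain0 R N :=
  fun x => k * T x.

(* Main.v *)
Require Import Defs.
From mathcomp Require Import all_boot all_order all_algebra.
From mathcomp Require Import all_classical all_reals.
From mathcomp Require Import zify ring lra.
From Stdlib Require List.
Import Order.TTheory GRing.Theory Num.Theory.
Set Implicit Arguments. Unset Strict Implicit. Unset Printing Implicit Defensive.
Local Open Scope ring_scope.
Section Comb.
Variable P : eqType.
Definition dv (E : seq (P * P)) (x : P) : int :=
  \sum_(e <- E) ((x == e.2)%:R - (x == e.1)%:R).

Lemma dv_cons (e : P*P) E x : dv (e :: E) x = ((x == e.2)%:R - (x == e.1)%:R) + dv E x.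
Proof. by rewrite /dv big_cons. Qed.
Lemma dv_cat A B x : dv (A ++ B) x = dv A x + dv B x.
Proof. by rewrite /dv big_cat. Qed.
Lemma dv_perm A B x : perm_eq A B -> dv A x = dv B x.
Proof. by move=> pAB; rewrite /dv (perm_big _ pAB). Qed.

Definition Split (E : seq (P * P)) := exists A B : seq (P * P),
  perm_eq E (A ++ B) /\ forall x, dv A x = dv B x.

Definition Even (E : seq (P * P)) := forall x, exists k : int, dv E x = 2 * k.

Lemma Split_perm E E' : perm_eq E E' -> Split E' -> Split E.
Proof.
move=> pE [A [B [pAB eAB]]]; exists A, B; split => //.
exact: perm_trans pE pAB.
Qed.

Lemma split_mem (e : P * P) R A B : perm_eq (e :: R) (A ++ B) -> e \in A ->
  exists A'', perm_eq A (e :: A'') /\ perm_eq R (A'' ++ B).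
Proof.
move=> pR eA; exists (rem e A); split; first exact: perm_to_rem.
have : perm_eq (e :: R) (e :: (rem e A ++ B)).
  apply: perm_trans pR _; rewrite -cat_cons perm_cat2r; exact: perm_to_rem.
by rewrite perm_cons.
Qed.

Lemma split_memB (e : P * P) R A B : perm_eq (e :: R) (A ++ B) -> e \in B ->
  exists B'', perm_eq B (e :: B'') /\ perm_eq R (A ++ B'').
Proof.
move=> pR eB.
have pR' : perm_eq (e :: R) (B ++ A) by apply: perm_trans pR _; rewrite perm_catC.
have [B'' [h1 h2]] := split_mem pR' eB.
exists B''; split => //; apply: perm_trans h2 _; rewrite perm_catC //.
Qed.

Lemma merge_same (e1 e2 e' : P * P) R :
  (forall x, dv [:: e1; e2] x = dv [:: e'] x) ->
  Split (e' :: R) -> Split (e1 :: e2 :: R).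
Proof.
move=> hd [A [B [pAB eAB]]].
have : e' \in A ++ B by rewrite -(perm_mem pAB) mem_head.
rewrite mem_cat => /orP [eA | eB].
- have [A'' [h1 h2]] := split_mem pAB eA.
  exists [:: e1, e2 & A''], B; split; first by rewrite /= !perm_cons.
  move=> x; rewrite -eAB (dv_perm x h1) -[e1 :: _]/([:: e1; e2] ++ A'') dv_cat hd.
  by rewrite -dv_cat.
- have [B'' [h1 h2]] := split_memB pAB eB.
  exists A, [:: e1, e2 & B'']; split.
    rewrite perm_sym perm_catC /= !perm_cons perm_sym.
    by apply: perm_trans h2 _; rewrite perm_catC.
  move=> x; rewrite eAB (dv_perm x h1) -[e1 :: _]/([:: e1; e2] ++ B'') dv_cat hd.
  by rewrite -dv_cat.
Qed.

Lemma merge_diff (e1 e2 e' : P * P) R :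
  (forall x, dv [:: e1] x = dv [:: e2] x + dv [:: e'] x) ->
  Split (e' :: R) -> Split (e1 :: e2 :: R).
Proof.
move=> hd [A [B [pAB eAB]]].
have : e' \in A ++ B by rewrite -(perm_mem pAB) mem_head.
rewrite mem_cat => /orP [eA | eB].
- have [A'' [h1 h2]] := split_mem pAB eA.
  exists (e1 :: A''), (e2 :: B); split.
    move/permP: h2 => h2; apply/permP => p; rewrite /= !count_cat /= h2 count_cat; case: (p e1); case: (p e2) => /=; lia.
  move=> x; rewrite !dv_cons -eAB (dv_perm x h1) dv_cons.
  have := hd x; rewrite /dv !big_cons !big_nil; lia.
- have [B'' [h1 h2]] := split_memB pAB eB.
  exists (e2 :: A), (e1 :: B''); split.
    move/permP: h2 => h2; apply/permP => p; rewrite /= !count_cat /= h2 count_cat; case: (p e1); case: (p e2) => /=; lia.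
  move=> x; rewrite !dv_cons eAB (dv_perm x h1) dv_cons.
  have := hd x; rewrite /dv !big_cons !big_nil; lia.
Qed.


Lemma dv1 (e : P * P) x : dv [:: e] x = (x == e.2)%:R - (x == e.1)%:R.
Proof. by rewrite /dv big_cons big_nil addr0. Qed.

Lemma split_even n (E : seq (P * P)) : (size E <= n)%N -> Even E -> Split E.
Proof.
elim: n E => [|n IH] [|e rest] //=.
- by move=> _ _; exists [::], [::].
- by move=> _ _; exists [::], [::].
move=> hs hE.
case: e hE => v y hE.
have [vy | nvy] := eqVneq v y.
  have hr : Even rest.
    move=> x; have [k hk] := hE x; exists k; rewrite -hk dv_cons /= vy; ring.
  have [A [B [pAB eAB]]] := IH rest hs hr.
  exists ((v, y) :: A), B; split.
    move/permP: pAB => h2; apply/permP => p; rewrite /= h2 !count_cat; lia.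
  by move=> x; rewrite dv_cons /= vy subrr add0r eAB.
have hodd : dv rest v != 0.
  have [k hk] := hE v; move: hk; rewrite dv_cons /= eqxx (negbTE nvy) /=.
  move=> hk; apply/eqP => h0; move: hk; rewrite h0; lia.
have : has (fun e2 : P * P => (v == e2.1) || (v == e2.2)) rest.
  apply/negPn/negP => /hasPn hn; move/eqP: hodd; apply.
  rewrite /dv big_seq big1 // => e ein.
  have /norP [h1 h2] := hn e ein.
  by rewrite (negbTE h1) (negbTE h2) subrr.
case/hasP => e2 e2in he2.
have pr := perm_to_rem e2in.
set R := rem e2 rest in pr.
have szR : size rest = (size R).+1 by rewrite (perm_size pr).
have dvE x : dv [:: (v, y) & rest] x = dv [:: (v, y)] x + dv [:: e2] x + dv R x.
  by rewrite dv_cons (dv_perm x pr) !dv_cons /dv !big_nil !addr0 !addrA.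
apply: (@Split_perm _ [:: (v, y), e2 & R]); first by rewrite perm_cons.
clearbody R; case: e2 he2 {e2in pr} dvE => w z /= he2 dvE.
case: (boolP (v == z)) => [/eqP vz | nvz].
- subst z; apply: (@merge_same _ _ (w, y)).
    by move=> x; rewrite -[[:: _; _]]/([:: (v,y)] ++ [:: (w,v)]) dv_cat !dv1 /=; ring.
  apply: IH; first by rewrite /= -ltnS -szR.
  move=> x; have [k hk] := hE x; exists k; rewrite -hk dvE dv_cons !dv1 /=; ring.
- have vw : v = w by move: he2; rewrite (negbTE nvz) orbF => /eqP.
  subst w; apply: (@merge_diff _ _ (z, y)).
    by move=> x; rewrite !dv1 /=; ring.
  apply: IH; first by rewrite /= -ltnS -szR.
  move=> x; have [k hk] := hE x.
  exists (k - ((x == z)%:R - (x == v)%:R)).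
  rewrite dvE !dv1 /= in hk; rewrite dv_cons /= mulrBr -hk; ring.
Qed.

End Comb.
Local Open Scope classical_set_scope.
Section Geo.
Variables (R : realType) (N : nat).
Implicit Types (g : R -> 'rV[R]_N) (v : 'rV[R]_N).

Lemma enorm_ge0 v : 0 <= enorm v.
Proof. exact: sqrtr_ge0. Qed.

Lemma enormZ (k : R) v : enorm (k *: v) = `|k| * enorm v.
Proof.
rewrite /enorm.
have -> : \sum_(i < N) (k *: v) ord0 i ^+ 2 = k ^+ 2 * \sum_(i < N) v ord0 i ^+ 2.
  by rewrite mulr_sumr; apply: eq_bigr => i _; rewrite mxE exprMn.
by rewrite sqrtrM ?sqr_ge0 // sqrtr_sqr.
Qed.

Lemma enormN v : enorm (- v) = enorm v.
Proof. by rewrite -scaleN1r enormZ normrN normr1 mul1r. Qed.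

Definition in01 (t : R) : bool := (0 <= t) && (t <= 1).

Lemma psum_bound_aux g (c : R) :
  (forall a b, in01 a -> in01 b -> a <= b -> enorm (g b - g a) <= c * (b - a)) ->
  forall s x, sorted <=%R (x :: s) -> all in01 (x :: s) ->
  partition_sum g (x :: s) <= c * (last x s - x).
Proof.
move=> hg; elim => [|y s IH] x.
  by move=> _ _; rewrite /partition_sum big_ord0 subrr mulr0.
move=> /= /andP [xy sy] /and3P [x01 y01 a01].
rewrite /partition_sum /= big_ord_recl /=.
have := IH y; rewrite /= sy y01 a01 => /(_ isT isT) h.
have h1 := hg x y x01 y01 xy.
rewrite /partition_sum /= in h.
apply: le_trans (lerD h1 h) _; lra.
Qed.

Lemma psum_bound g (c : R) : 0 <= c ->
  (forall a b, in01 a -> in01 b -> a <= b -> enorm (g b - g a) <= c * (b - a)) ->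
  forall s, sorted <=%R s -> all in01 s -> partition_sum g s <= c.
Proof.
move=> c0 hg [|x s] ss sa.
  by rewrite /partition_sum big_ord0.
apply: le_trans (psum_bound_aux hg ss sa) _.
have : in01 (last x s) by apply: (allP sa); exact: mem_last.
move: sa => /= /andP [/andP [x0 x1] _] /andP [l0 l1].
rewrite -[leRHS]mulr1; apply: ler_wpM2l => //; lra.
Qed.

Definition Sg g := [set x : R | exists s : seq R,
        [/\ sorted <=%R s, all (fun t => 0 <= t <= 1) s & x = partition_sum g s]].

Lemma lip_bound g : lipschitz01 g -> exists c, 0 <= c /\
  (forall a b, in01 a -> in01 b -> a <= b -> enorm (g b - g a) <= c * (b - a)).
Proof.
move=> [L hL]; exists `|L|; split => // a b a01 b01 ab.
apply: le_trans (hL _ _ b01 a01) _.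
rewrite ger0_norm ?subr_ge0 //; apply: ler_wpM2r; rewrite ?subr_ge0 //.
exact: ler_norm.
Qed.

Lemma curve_length_ge g : lipschitz01 g ->
  0 <= curve_length g /\ enorm (g 1 - g 0) <= curve_length g.
Proof.
move=> /lip_bound [c [c0 hc]].
have ub : has_ubound (Sg g).
  exists c => x [s [ss sa ->]]; exact: psum_bound hc s ss sa.
split; apply: (ub_le_sup ub).
  by exists [::]; split => //; rewrite /partition_sum big_ord0.
exists [:: 0; 1]; split => //=; first by rewrite ler01.
  by rewrite lexx ler01 lexx.
by rewrite /partition_sum big_ord1.
Qed.

Definition seg (p q : 'rV[R]_N) : R -> 'rV[R]_N := fun t => p + t *: (q - p).

Lemma seg_diff p q a b : seg p q b - seg p q a = (b - a) *: (q - p).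
Proof. by rewrite /seg scalerBl opprD addrACA subrr add0r. Qed.

Lemma seg_lip p q : lipschitz01 (seg p q).
Proof.
exists (enorm (q - p)) => s t _ _.
by rewrite seg_diff enormZ mulrC.
Qed.

Lemma seg_length p q : curve_length (seg p q) <= enorm (q - p).
Proof.
apply: ge_sup.
  by exists 0, [::]; split => //; rewrite /partition_sum big_ord0.
move=> x [s [ss sa ->]]; apply: psum_bound (enorm_ge0 _) _ s ss sa.
move=> a b _ _ ab; rewrite seg_diff enormZ ger0_norm ?subr_ge0 // mulrC //.
Qed.

Lemma seg0 p q : seg p q 0 = p. Proof. by rewrite /seg scale0r addr0. Qed.
Lemma seg1 p q : seg p q 1 = q. Proof. by rewrite /seg scale1r addrC subrK. Qed.

End Geo.
Section Main.
Variables (R : realType) (N : nat).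
Local Notation P := 'rV[R]_N.

Lemma In_map (A B : Type) (f : A -> B) (s : seq A) y :
  List.In y [seq f x | x <- s] -> exists x, f x = y /\ List.In x s.
Proof.
elim: s => [|a s IH] //= [<-|h]; first by exists a; split => //; left.
by have [x [hx hs]] := IH h; exists x; split => //; right.
Qed.

Definition edge_of (c : int * (R -> P)) : P * P :=
  if 0 <= c.1 then (c.2 0, c.2 1) else (c.2 1, c.2 0).
Definition edges (V : chain1 R N) : seq (P * P) :=
  flatten [seq nseq `|c.1|%N (edge_of c) | c <- V].
Definition cst (E : seq (P * P)) : R := \sum_(e <- E) enorm (e.2 - e.1).

Lemma dv_nseq n (e : P * P) x : dv (nseq n e) x = dv [:: e] x *+ n.
Proof.
elim: n => [|n IH]; first by rewrite /dv big_nil.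
by rewrite /= dv_cons IH mulrS -dv1.
Qed.

Lemma cst_nseq n (e : P * P) : cst (nseq n e) = cst [:: e] *+ n.
Proof.
elim: n => [|n IH]; first by rewrite /cst big_nil.
by move: IH; rewrite /= /cst !big_cons big_nil addr0 mulrS => ->.
Qed.

Lemma dv_edges (V : chain1 R N) x : dv (edges V) x = bdry V x.
Proof.
elim: V => [|c V IH]; first by rewrite /dv /bdry !big_nil.
rewrite /edges /= dv_cat -/(edges V) IH /bdry big_cons -/(bdry V x); congr (_ + _).
rewrite dv_nseq dv1 /edge_of; case: ifP => h /=; rewrite -[_ *+ `|c.1|%N]mulr_natl natr_absz intz.
  by rewrite ger0_norm.
by rewrite ltr0_norm ?ltNge ?h //; ring.
Qed.

Lemma cst_edges (V : chain1 R N) : lipschitz_chain V -> cst (edges V) <= mass V.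
Proof.
elim: V => [|c V IH] hV; first by rewrite /cst /mass !big_nil.
have hc : lipschitz01 c.2 by apply: hV; left.
have hV' : lipschitz_chain V by move=> d hd; apply: hV; right.
rewrite /edges /= /cst big_cat -/(cst _) -/(edges V) cst_nseq /mass big_cons -/(mass V).
apply: lerD; last exact: IH.
rewrite -mulr_natl natr_absz /cst big_cons big_nil addr0.
apply: ler_wpM2l; first by rewrite ler0z.
have [_ hl] := curve_length_ge hc.
apply: le_trans hl; rewrite /edge_of; case: ifP => //= _.
by rewrite -enormN opprB.
Qed.

Lemma mass_ge0 (V : chain1 R N) : lipschitz_chain V -> 0 <= mass V.
Proof.
elim: V => [|c V IH] hV; first by rewrite /mass big_nil.
have hc : lipschitz01 c.2 by apply: hV; left.
have hV' : lipschitz_chain V by move=> d hd; apply: hV; right.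
rewrite /mass big_cons -/(mass V); apply: addr_ge0; last exact: IH.
apply: mulr_ge0; first by rewrite ler0z.
by have [] := curve_length_ge hc.
Qed.

Definition FVset (T : chain0 R N) := [set m : R | exists U : chain1 R N,
        [/\ lipschitz_chain U, bdry U = T & m = mass U]].

Lemma FVset_lb (T : chain0 R N) : has_lbound (FVset T).
Proof. by exists 0 => m [U [hU _ ->]]; exact: mass_ge0. Qed.

Lemma double_chain (U : chain1 R N) : lipschitz_chain U ->
  let U2 := [seq (2 * c.1, c.2) | c <- U] in
  [/\ lipschitz_chain U2, bdry U2 = scale0 2 (bdry U) & mass U2 = 2 * mass U].
Proof.
move=> hU U2; split.
- move=> c hc; have [d [hdc hd]] := In_map hc; rewrite -hdc /=. exact: (hU d hd).
- apply: funext => x; rewrite /bdry /scale0 big_map mulr_sumr.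
  by apply: eq_bigr => c _; rewrite mulrA.
- rewrite /mass big_map mulr_sumr; apply: eq_bigr => c _ /=.
  by rewrite normrM intrM mulrA.
Qed.

Lemma halve_chain (V : chain1 R N) (T : chain0 R N) : lipschitz_chain V -> bdry V = scale0 2 T ->
  exists U, [/\ lipschitz_chain U, bdry U = T & 2 * mass U <= mass V].
Proof.
move=> hV hb.
have hE : Even (edges V).
  by move=> x; exists (T x); rewrite dv_edges hb.
have [A [B [pAB eAB]]] := split_even (leqnn _) hE.
have hcst : cst A + cst B = cst (edges V).
  by rewrite /cst (perm_big _ pAB) big_cat.
have hdv x : T x = dv A x.
  have := dv_edges V x; rewrite (dv_perm x pAB) dv_cat -eAB hb /scale0 => h.
  lia.
pose C := if cst A <= cst B then A else B.
have hC x : dv C x = T x by rewrite /C hdv; case: ifP => // _; rewrite eAB.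
have hcC : 2 * cst C <= cst (edges V).
  rewrite -hcst /C; case: ifP => h; lra.
exists [seq (1%:Z, seg e.1 e.2) | e <- C]; split.
- by move=> c hc; have [d [hdc hd]] := In_map hc; rewrite -hdc /=; exact: seg_lip.
- apply: funext => x; rewrite -hC /bdry /dv big_map; apply: eq_bigr => e _ /=.
  by rewrite mul1r seg0 seg1.
- apply: le_trans (le_trans _ hcC) (cst_edges hV).
  apply: ler_wpM2l => //; rewrite /mass /cst big_map; apply: ler_sum => e _ /=.
  by rewrite normr1 mul1r; exact: seg_length.
Qed.

End Main.

Theorem proposition4p1 (R : realType) (N : nat) (T : chain0 R N) :
  is_chain0 T ->
  (exists U : chain1 R N, lipschitz_chain U /\ bdry U = T) ->
  FV T = FV (scale0 2 T) / 2.
Proof.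
move=> _ [U0 [hU0 hb0]].
have [h2l h2b h2m] := double_chain hU0.
rewrite hb0 in h2b.
have ne1 : FVset T !=set0 by exists (mass U0), U0.
have ne2 : FVset (scale0 2 T) !=set0 by eexists; eexists; split; [exact: h2l|exact: h2b|].
apply/eqP; rewrite eq_le; apply/andP; split.
- rewrite ler_pdivlMr // mulrC.
  apply: (lb_le_inf ne2) => m [V [hV hbV ->]].
  have [U [hU hbU hm]] := halve_chain hV hbV.
  apply: le_trans hm; apply: ler_wpM2l => //.
  by apply: (ge_inf (FVset_lb T)); exists U.
- idtac.
  apply: (lb_le_inf ne1) => m [U [hU hbU ->]].
  idtac.
  have [l2 b2 m2] := double_chain hU.
  have : FV (scale0 2 T) <= mass [seq (2 * c.1, c.2) | c <- U].
    by apply: (ge_inf (FVset_lb _)); exists [seq (2 * c.1, c.2) | c <- U]; rewrite b2 hbU.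
  rewrite m2 => h; rewrite ler_pdivrMr //; lra.
Qed.
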